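(* Let $0 < q < 1$ be real and let $d \geq 3$, $1 \leq r < \frac d2$ be integers. Let $E_1, E_2, \dots$ be independent events with $\mathbf{P}(E_j) = \frac{q^j}{1+q^j}$, let $F_j$ be the complement of $E_j$, and write $E_n^k := E_{nd+k}$, $F_n^k := F_{nd+k}$ (juxtaposition of events denotes intersection). Define \begin{align*} U_{d,r} &:= \bigcap_{n\geq0}\left(E_n^r F_n^{d-r} F_{n+1}^0 \cup F_n^r\right)\left(E_n^{d-r} F_{n+1}^0 F_{n+1}^r \cup F_n^{d-r}\right)\left(E_{n+1}^0 F_{n+1}^r F_{n+1}^{d-r} F_{n+2}^0 \cup F_{n+1}^0\right),\\ V_{d,r} &:= \bigcap_{n\geq1}\left(E_n^r F_n^{d-r} F_{n+1}^0 \cup F_n^r\right)\left(E_n^{d-r} F_{n+1}^0 F_{n+1}^r \cup F_n^{d-r}\right)\left(E_{n+1}^0 F_{n+1}^r F_{n+1}^{d-r} F_{n+2}^0 \cup F_{n+1}^0\right). \end{align*} Then (1) $\displaystyle \mathbf{P}(U_{d,r} \mid V_{d,r}) = \frac{1}{(1+q^r)(1+q^{d-r})(1+q^d)} \cdot \frac{1}{g_3\left(-q^r;q^d\right)}$; (2) $\mathbf{P}(F_r \cap F_{d-r} \cap F_d \mid U_{d,r}) = g_3\left(-q^r; q^d\right)$.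
   Context: $(a;q)_n := \prod_{j=0}^{n-1}(1-aq^j)$ and $g_3(x;q) := \sum_{n\geq0}\frac{q^{n(n+1)}}{(x;q)_{n+1}(x^{-1}q;q)_{n+1}}$ is Hickerson's universal mock theta function. *)

(* Defs.v *)
From HB Require Import structures.
From mathcomp Require Import all_boot all_order all_algebra.
From mathcomp Require Import all_classical all_reals all_analysis.
Set Implicit Arguments. Unset Strict Implicit. Unset Printing Implicit Defensive.
Import Order.TTheory GRing.Theory Num.Theory.
Import numFieldNormedType.Exports.
Local Open Scope classical_set_scope.
Local Open Scope ring_scope.

Definition pr d (T : measurableType d) (R : realType) (P : probability T R)
  (A : set T) : R := fine (P A).

Definition condpr d (T : measurableType d) (R : realType) (P : probability T R)
  (A B : set T) : R := pr P (A `&` B) / pr P B.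

Definition indep_events_pos d (T : measurableType d) (R : realType)
  (P : probability T R) (E : nat -> set T) : Prop :=
  forall s : seq nat, uniq s -> all (fun i => (0 < i)%N) s ->
    pr P (\bigcap_(i in [set` s]) E i) = \prod_(i <- s) pr P (E i).

Definition qpoch (R : ringType) (a q : R) (n : nat) : R :=
  \prod_(j < n) (1 - a * q ^+ j).

Definition g3_term (R : fieldType) (x q : R) (n : nat) : R :=
  q ^+ (n * n.+1) / (qpoch x q n.+1 * qpoch (x^-1 * q) q n.+1).

Definition g3 (R : realType) (x q : R) : R := limn (series (g3_term x q)).

Definition UV_block T (E : nat -> set T) (d r n : nat) : set T :=
  let Ev n k := E (n * d + k)%N in
  let Fv n k := ~` E (n * d + k)%N in
  ((Ev n r `&` Fv n (d - r)%N `&` Fv n.+1 0%N) `|` Fv n r) `&`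
  ((Ev n (d - r)%N `&` Fv n.+1 0%N `&` Fv n.+1 r) `|` Fv n (d - r)%N) `&`
  ((Ev n.+1 0%N `&` Fv n.+1 r `&` Fv n.+1 (d - r)%N `&` Fv n.+2 0%N)
     `|` Fv n.+1 0%N).

Definition Uevt T (E : nat -> set T) (d r : nat) : set T :=
  \bigcap_(n in [set: nat]) UV_block E d r n.

Definition Vevt T (E : nat -> set T) (d r : nat) : set T :=
  \bigcap_(n in [set n : nat | (1 <= n)%N]) UV_block E d r n.

(* Main.v *)
Require Import Defs.
From HB Require Import structures.
From mathcomp Require Import all_boot all_order all_algebra.
From mathcomp Require Import all_classical all_reals all_analysis.
From mathcomp Require Import ring lra zify.
Import Order.TTheory GRing.Theory Num.Theory.
Import numFieldNormedType.Exports.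
Local Open Scope classical_set_scope.
Local Open Scope ring_scope.

Lemma prod_le_expR (R : realType) k (t : nat -> R) :
  (forall j, 0 <= t j) -> \prod_(j < k) (1 + t j) <= expR (\sum_(j < k) t j).
Proof.
move=> t0; rewrite expR_sum; apply: ler_prod => j _.
by rewrite expR_ge1Dx andbT addr_ge0.
Qed.

Section QS.
Variables (R : realType) (x w : R).
Hypotheses (hx : 0 < x) (hw : 0 < w) (hQ1 : x * w < 1).

Let Q := x * w.
Lemma Q_gt0 : 0 < Q. Proof. exact: mulr_gt0. Qed.
Lemma Q_lt1 : Q < 1. Proof. exact: hQ1. Qed.

Lemma qpoch_recr (a : R) k : qpoch a Q k.+1 = qpoch a Q k * (1 - a * Q ^+ k).
Proof. by rewrite /qpoch big_ord_recr. Qed.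

Lemma qpoch_recl (a : R) k : qpoch a Q k.+1 = (1 - a) * qpoch (a * Q) Q k.
Proof.
rewrite /qpoch big_ord_recl expr0 mulr1; congr (_ * _).
by apply: eq_bigr => i _; rewrite lift0 exprS mulrA.
Qed.


Lemma qpoch0 (a : R) : qpoch a Q 0 = 1.
Proof. by rewrite /qpoch big_ord0. Qed.

Lemma qpoch1 (a : R) : qpoch a Q 1 = 1 - a.
Proof. by rewrite qpoch_recr qpoch0 mul1r expr0 mulr1. Qed.

Lemma Qpow_ge0 m : 0 <= Q ^+ m.
Proof. by rewrite exprn_ge0 // ltW // Q_gt0. Qed.
Lemma Qpow_gt0 m : 0 < Q ^+ m.
Proof. by rewrite exprn_gt0 // Q_gt0. Qed.
Lemma Qpow_le1 m : Q ^+ m <= 1.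
Proof. by rewrite exprn_ile1 ?ltW ?Q_gt0 ?Q_lt1. Qed.
Lemma Qpow_lt1 m : Q ^+ m.+1 < 1.
Proof. by rewrite exprn_ilt1 ?ltW ?Q_gt0 ?Q_lt1. Qed.

Lemma qpochQ_gt0 k : 0 < qpoch Q Q k.
Proof.
rewrite /qpoch; apply: prodr_gt0 => i _; rewrite subr_gt0 -exprS.
exact: Qpow_lt1.
Qed.

Lemma qpoch_ge0 n k : 0 <= qpoch (Q ^+ n) Q k.
Proof.
rewrite /qpoch; apply: prodr_ge0 => i _; rewrite subr_ge0 -exprD.
exact: Qpow_le1.
Qed.

Lemma qpoch_le1 n k : qpoch (Q ^+ n) Q k <= 1.
Proof.
rewrite /qpoch; apply: prodr_ile1 => i _; rewrite -exprD.
have := Qpow_le1 (n + i); have := Qpow_ge0 (n + i).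
move=> h1 h2; apply/andP; split; lra.
Qed.

Definition Dn n := (1 + x * Q ^+ n) * (1 + w * Q ^+ n).
Definition cc n k := Q ^+ (k * (k + n)) * qpoch (Q ^+ n) Q k / qpoch Q Q k.
Definition xx n k := Q ^+ (k * (k + n)) * qpoch (Q ^+ n.+1) Q k / qpoch Q Q k.
Definition Bn n := Q ^+ n.+1 * (1 - Q ^+ n.+1).

Lemma cc_rec n k : cc n k.+1 = cc n.+1 k * (1 + (x + w) * Q ^+ n)
  + (if k is k'.+1 then Bn n * cc n.+2 k' else 0) + xx n k.+1 - xx n k * Dn (n + k).
Proof.
have Qn0 : Q != 0 by rewrite gt_eqF // Q_gt0.
case: k => [|k].
  rewrite /cc /xx /Dn !qpoch1 !qpoch0 ?addn0 ?mul0n ?expr0 ?mul1r ?mulr1 ?divr1 ?add0n ?addr0 ?addn0.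
  have h1 : 1 - Q != 0 by rewrite subr_eq0 eq_sym lt_eqF // Q_lt1.
  rewrite mul1n add1n exprS /Q in h1 *; field => //.
have rq0 := qpochQ_gt0 k.
have e1 : qpoch (Q ^+ n) Q k.+2 = (1 - Q ^+ n) * (1 - Q ^+ n.+1) * qpoch (Q ^+ n.+2) Q k.
  by rewrite !qpoch_recl -!exprSr mulrA.
have e2 : qpoch (Q ^+ n.+1) Q k.+2 = (1 - Q ^+ n.+1) * (qpoch (Q ^+ n.+2) Q k * (1 - Q ^+ n.+2 * Q ^+ k)).
  by rewrite qpoch_recl qpoch_recr -exprSr.
have e3 : qpoch (Q ^+ n.+1) Q k.+1 = (1 - Q ^+ n.+1) * qpoch (Q ^+ n.+2) Q k.
  by rewrite qpoch_recl -exprSr.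
have e4 : qpoch Q Q k.+2 = qpoch Q Q k * (1 - Q * Q ^+ k) * (1 - Q * Q ^+ k.+1).
  by rewrite !qpoch_recr.
have e5 : qpoch Q Q k.+1 = qpoch Q Q k * (1 - Q * Q ^+ k) by rewrite qpoch_recr.
have p1 : Q ^+ (k.+2 * (k.+2 + n)) = Q ^+ (k * (k + n.+2)) * (Q ^+ k) ^+ 2 * (Q ^+ n) ^+ 2 * Q ^+ 4.
  by rewrite -!exprM -!exprD; congr (_ ^+ _); ring.
have p2 : Q ^+ (k.+1 * (k.+1 + n.+1)) = Q ^+ (k * (k + n.+2)) * Q ^+ k * Q ^+ n * Q ^+ 2.
  by rewrite -!exprD; congr (_ ^+ _); ring.
have p3 : Q ^+ (k.+1 * (k.+1 + n)) = Q ^+ (k * (k + n.+2)) * Q ^+ n * Q.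
  by rewrite -!exprD -[X in _ = _ * X]expr1 -exprD; congr (_ ^+ _); ring.
have p4 : Q ^+ (n + k.+1) = Q ^+ n * Q ^+ k * Q by rewrite exprD exprSr mulrA.
rewrite /cc /xx /Dn /Bn e1 e2 e3 e4 e5 p1 p2 p3 p4.
have hA : 1 - Q * Q ^+ k != 0 by rewrite subr_eq0 eq_sym lt_eqF // -exprS Qpow_lt1.
have hA2 : 1 - Q * (Q * Q ^+ k) != 0.
  by rewrite subr_eq0 eq_sym lt_eqF // -!exprS Qpow_lt1.
clear e1 e2 e3 e4 e5 p1 p2 p3 p4.
move: (qpoch (Q ^+ n.+2) Q k) (qpoch Q Q k) rq0 (Q ^+ (k * (k + n.+2))) => p rr rq0 b.
rewrite !exprS !expr0 in hA hA2 *.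
move: (Q ^+ k) (Q ^+ n) hA hA2 => A B hA hA2.
rewrite /Q in hA hA2 Qn0 *.
have rr0 : rr != 0 by rewrite gt_eqF.
field; rewrite ?rr0 ?hA ?hA2 //.
Qed.



Lemma geom_le a k : 0 <= a -> \sum_(j < k) a * Q ^+ j <= a / (1 - Q).
Proof.
move=> a0; have := @geometric_le_lim R k a Q a0 Q_gt0.
rewrite gtr0_norm ?Q_gt0 // => /(_ Q_lt1).
by rewrite /series /= big_mkord.
Qed.

Definition C1 := expR (Q / (1 - Q) ^+ 2).

Lemma invqpoch_le k : (qpoch Q Q k)^-1 <= C1.
Proof.
have Q1 : 0 < 1 - Q by rewrite subr_gt0 Q_lt1.
rewrite /qpoch -prodfV.
apply: (@le_trans _ _ (\prod_(j < k) (1 + Q / (1 - Q) * Q ^+ j))).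
  apply: ler_prod => j _.
  have t1 := Qpow_lt1 j; have t0 := Qpow_gt0 j.+1.
  have q0 := Q_gt0; have q1 := Q_lt1.
  have hj : Q * Q ^+ j < 1 by rewrite -exprS.
  have hj' : Q * Q ^+ j <= Q by rewrite -[X in _ <= X]mulr1 ler_pM2l ?Q_gt0 // Qpow_le1.
  rewrite invr_ge0 subr_ge0 ltW //=.
  have -> : (1 - Q * Q ^+ j)^-1 = 1 + Q * Q ^+ j / (1 - Q * Q ^+ j).
    by field; rewrite subr_eq0 eq_sym lt_eqF.
  rewrite lerD2l [Q / _ * _]mulrAC; apply: ler_wpM2l.
    by rewrite mulr_ge0 ?Qpow_ge0 // ltW // Q_gt0.
  by rewrite lef_pV2 ?posrE ?subr_gt0 // lerB.
have H := @prod_le_expR R k (fun j => Q / (1 - Q) * Q ^+ j).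
apply: (le_trans (H _)) => [j|].
  by rewrite mulr_ge0 ?Qpow_ge0 // divr_ge0 ?ltW // Q_gt0.
rewrite /C1 ler_expR.
apply: (le_trans (@geom_le _ k _)); first by rewrite divr_ge0 ?ltW // Q_gt0.
by rewrite expr2 invfM mulrA.
Qed.

Lemma C1_gt0 : 0 < C1. Proof. exact: expR_gt0. Qed.

Lemma cc_ge0 n k : 0 <= cc n k.
Proof. by rewrite /cc divr_ge0 ?mulr_ge0 ?Qpow_ge0 ?qpoch_ge0 // ltW // qpochQ_gt0. Qed.

Lemma Qpow_mono m n : (n <= m)%N -> Q ^+ m <= Q ^+ n.
Proof. by move=> h; apply: ler_wiXn2l => //; [exact: ltW Q_gt0 | exact: ltW Q_lt1]. Qed.

Lemma cc_le n k : cc n k <= C1 * Q ^+ k.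
Proof.
rewrite /cc -mulrA [C1 * _]mulrC.
have i0 : 0 <= (qpoch Q Q k)^-1 by rewrite invr_ge0 ltW // qpochQ_gt0.
apply: ler_pM; first exact: Qpow_ge0.
  by rewrite mulr_ge0 ?qpoch_ge0.
  by apply: Qpow_mono; clear i0; case: k => // k; rewrite leq_pmulr.
rewrite -[C1]mul1r; apply: ler_pM => //; first exact: qpoch_ge0.
  exact: qpoch_le1.
exact: invqpoch_le.
Qed.



Lemma Dn_ge1 n : 1 <= Dn n.
Proof.
rewrite /Dn; apply: mulr_ege1; rewrite lerDl mulr_ge0 ?Qpow_ge0 //; exact: ltW.
Qed.

Definition Pp n k := \prod_(j < k) Dn (n + j).

Lemma Pp_ge1 n k : 1 <= Pp n k.
Proof.
rewrite /Pp; elim: k => [|k IH]; first by rewrite big_ord0.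
by rewrite big_ord_recr /= mulr_ege1 // Dn_ge1.
Qed.

Lemma Pp_gt0 n k : 0 < Pp n k.
Proof. exact: lt_le_trans ltr01 (Pp_ge1 n k). Qed.

Lemma Pp0 n : Pp n 0 = 1. Proof. by rewrite /Pp big_ord0. Qed.

Lemma Pp_recl n k : Pp n k.+1 = Dn n * Pp n.+1 k.
Proof.
rewrite /Pp big_ord_recl addn0; congr (_ * _).
by apply: eq_bigr => i _; rewrite lift0 addnS addSn.
Qed.

Lemma Pp_recr n k : Pp n k.+1 = Pp n k * Dn (n + k).
Proof. by rewrite /Pp big_ord_recr. Qed.

Definition uu n k := cc n k / Pp n k.

Lemma uu_ge0 n k : 0 <= uu n k.
Proof. by rewrite /uu divr_ge0 ?cc_ge0 // ltW // Pp_gt0. Qed.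

Lemma uu_le n k : uu n k <= C1 * Q ^+ k.
Proof.
rewrite /uu ler_pdivrMr ?Pp_gt0 //; apply: (le_trans (cc_le n k)).
rewrite -[X in X <= _]mulr1 ler_wpM2l ?Pp_ge1 //.
by rewrite mulr_ge0 ?Qpow_ge0 // ltW // C1_gt0.
Qed.

Lemma series_uu_le n m : series (uu n) m <= C1 / (1 - Q).
Proof.
rewrite /series /= big_mkord; apply: le_trans (@geom_le C1 m (ltW C1_gt0)).
by apply: ler_sum => k _; exact: uu_le.
Qed.

Lemma series_uu_nd n : nondecreasing_seq (series (uu n)).
Proof.
move=> a b ab; rewrite /series /=.
by apply: (nondecreasing_series (fun k _ _ => uu_ge0 n k)).
Qed.

Lemma series_uu_cvg n : cvgn (series (uu n)).
Proof.
apply: nondecreasing_is_cvgn; first exact: series_uu_nd.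
by exists (C1 / (1 - Q)) => _ [m _ <-]; exact: series_uu_le.
Qed.

Definition psi n := limn (series (uu n)).

Lemma psi_cvg n : series (uu n) @ \oo --> psi n.
Proof. exact: series_uu_cvg. Qed.

Lemma psi_le n : psi n <= C1 / (1 - Q).
Proof.
apply: limr_le; first exact: series_uu_cvg.
by apply: nearW => m; exact: series_uu_le.
Qed.

Lemma uu0 n : uu n 0 = 1.
Proof. by rewrite /uu /cc Pp0 !qpoch0 mul0n expr0 !divr1 mulr1. Qed.

Lemma psi_ge1 n : 1 <= psi n.
Proof.
have := nondecreasing_cvgn_le (series_uu_nd n) (series_uu_cvg n) 1.
by rewrite /series /= big_nat1 uu0.
Qed.


Lemma seriesS (u : nat -> R) k : series u k.+1 = series u k + u k.
Proof. by rewrite /series /= big_nat_recr. Qed.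

Lemma series0 (u : nat -> R) : series u 0 = 0.
Proof. by rewrite /series /= big_geq. Qed.

Lemma Dn_neq0 n : Dn n != 0.
Proof. by rewrite gt_eqF // (lt_le_trans ltr01 (Dn_ge1 n)). Qed.

Lemma Pp_neq0 n k : Pp n k != 0.
Proof. by rewrite gt_eqF // Pp_gt0. Qed.

Let Ac n := (1 + (x + w) * Q ^+ n) / Dn n.
Let Bc n := Bn n / (Dn n * Dn n.+1).

Lemma psi_fin n K : series (uu n) K.+1 =
  Ac n * series (uu n.+1) K + Bc n * series (uu n.+2) (K - 1)%N + xx n K / Pp n K.
Proof.
elim: K => [|K IH].
  by rewrite seriesS !series0 uu0 /xx !qpoch0 mul0n expr0 Pp0 !mulr0 !add0r !divr1 mulr1.
rewrite seriesS IH seriesS subSS subn0.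
have e : series (uu n.+2) K = series (uu n.+2) (K - 1)%N + if K is k.+1 then uu n.+2 k else 0.
  by case: K {IH} => [|k]; rewrite ?series0 ?addr0 // seriesS subSS subn0.
rewrite e; clear e IH.
suff : uu n K.+1 = Ac n * uu n.+1 K + Bc n * (if K is k.+1 then uu n.+2 k else 0)
  + xx n K.+1 / Pp n K.+1 - xx n K / Pp n K.
  move=> ->; move: (series (uu n.+1) K) (series (uu n.+2) (K - 1)%N) => a b.
  set m := match K with 0%N => _ | _ => _ end.
  move: m (Ac n) (Bc n) => m A B; ring.
rewrite /uu cc_rec /Ac /Bc.
have P1 := Pp_recl n K; have P2 := Pp_recr n K.
have d0 := Dn_neq0 n; have d1 := Dn_neq0 n.+1; have pn := Pp_neq0 n K.
have pn1 := Pp_neq0 n.+1 K.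
case: K P1 P2 pn pn1 => [|k] P1 P2 pn pn1.
  rewrite P1 !Pp0 ?addn0 ?mulr0 ?addr0 ?mulr1; field.
  by rewrite d0.
have h : Pp n.+2 k = Pp n.+1 k * Dn (n.+1 + k) / Dn n.+1.
  by rewrite -Pp_recr Pp_recl mulrC mulrA mulVf ?mul1r // Dn_neq0.
have pb := Pp_neq0 n.+1 k.
rewrite h (Pp_recr n k.+1) (Pp_recl n k) (Pp_recr n.+1 k) addnS addSn.
field.
by rewrite d0 d1 pb Dn_neq0.
Qed.


Lemma xx_le n k : xx n k <= C1 * Q ^+ k.
Proof.
rewrite /xx -mulrA [C1 * _]mulrC.
have i0 : 0 <= (qpoch Q Q k)^-1 by rewrite invr_ge0 ltW // qpochQ_gt0.
apply: ler_pM; first exact: Qpow_ge0.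
  by rewrite mulr_ge0 ?qpoch_ge0.
  by apply: Qpow_mono; clear i0; case: k => // k; rewrite leq_pmulr.
rewrite -[C1]mul1r; apply: ler_pM => //; first exact: qpoch_ge0.
  exact: qpoch_le1.
exact: invqpoch_le.
Qed.

Lemma xx_ge0 n k : 0 <= xx n k.
Proof. by rewrite /xx divr_ge0 ?mulr_ge0 ?Qpow_ge0 ?qpoch_ge0 // ltW // qpochQ_gt0. Qed.

Lemma geomC1_cvg : (fun k => C1 * Q ^+ k) @ \oo --> 0.
Proof.
have := @cvg_geometric R C1 Q; rewrite gtr0_norm ?Q_gt0 // => /(_ Q_lt1).
by [].
Qed.

Lemma psi_rec n : psi n = Ac n * psi n.+1 + Bc n * psi n.+2.
Proof.
have h1 : (fun K => series (uu n) K.+1) @ \oo --> psi n.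
  by have := psi_cvg n; rewrite -cvg_shiftS.
have h2 : (fun K => series (uu n.+2) (K - 1)%N) @ \oo --> psi n.+2.
  by have := psi_cvg n.+2; rewrite -(cvg_centern 1).
have h3 : (fun K => xx n K / Pp n K) @ \oo --> 0.
  apply: (@squeeze_cvgr _ _ _ _ (fun _ => 0) (fun k => C1 * Q ^+ k)); last first.
  - exact: geomC1_cvg.
  - exact: cvg_cst.
  apply: nearW => k; rewrite divr_ge0 ?xx_ge0 ?(ltW (Pp_gt0 _ _)) //=.
  rewrite ler_pdivrMr ?Pp_gt0 //; apply: (le_trans (xx_le n k)).
  rewrite -[X in X <= _]mulr1 ler_wpM2l ?Pp_ge1 //.
  by rewrite mulr_ge0 ?Qpow_ge0 // ltW // C1_gt0.
have hR : (fun K => Ac n * series (uu n.+1) K + Bc n * series (uu n.+2) (K - 1)%N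
   + xx n K / Pp n K) @ \oo --> Ac n * psi n.+1 + Bc n * psi n.+2 + 0.
  apply: cvgD; last exact: h3.
  apply: cvgD; apply: cvgM; try exact: cvg_cst.
    exact: psi_cvg.
  exact: h2.
rewrite addr0 in hR.
have E : (fun K => series (uu n) K.+1) = (fun K => Ac n * series (uu n.+1) K
  + Bc n * series (uu n.+2) (K - 1)%N + xx n K / Pp n K).
  by apply: funext => K; exact: psi_fin.
rewrite E in h1.
exact: (cvg_unique _ h1 hR).
Qed.


Lemma psi0 : psi 0 = 1.
Proof.
have h1 : (fun K => series (uu 0) K.+1) @ \oo --> psi 0.
  by have := psi_cvg 0; rewrite -cvg_shiftS.
have E : (fun K => series (uu 0) K.+1) = (fun _ => 1).
  apply: funext; elim => [|K IH]; first by rewrite seriesS series0 add0r uu0.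
  by rewrite seriesS IH /uu /cc expr0 qpoch_recl subrr !(mul0r, mulr0) addr0.
rewrite E in h1; exact: (cvg_unique _ h1 (cvg_cst _)).
Qed.

Lemma g3_term_eq k : g3_term (- x) Q k = uu 1 k / Dn 0.
Proof.
have x0 : x != 0 by rewrite gt_eqF.
rewrite /g3_term /uu /cc expr1 addn1 mulfK; last by rewrite gt_eqF ?qpochQ_gt0.
have -> : qpoch (- x) Q k.+1 * qpoch ((- x)^-1 * Q) Q k.+1 = Pp 0 k.+1.
  rewrite /qpoch /Pp -big_split /=; apply: eq_bigr => i _; rewrite add0n /Dn.
  congr (_ * _); first by rewrite mulNr opprK.
  rewrite /Q invrN !mulNr opprK mulrA mulVf ?mul1r //.
rewrite Pp_recl; field.
by rewrite Pp_neq0 Dn_neq0.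
Qed.

Lemma g3_cvg : series (g3_term (- x) Q) @ \oo --> psi 1 / Dn 0.
Proof.
have E : series (g3_term (- x) Q) = (fun K => series (uu 1) K * (Dn 0)^-1).
  apply: funext => K; rewrite /series /= big_distrl /=.
  by apply: eq_bigr => k _; rewrite g3_term_eq.
rewrite E; apply: cvgM; [exact: psi_cvg | exact: cvg_cst].
Qed.

Definition Pz n := \prod_(j < n) (1 + Q ^+ j.+1).
Definition z n := psi n * Pz n.
Definition Az n := (1 + (x + w) * Q ^+ n) / (Dn n * (1 + Q ^+ n.+1)).
Definition Bz n := Bn n / (Dn n * Dn n.+1 * (1 + Q ^+ n.+1) * (1 + Q ^+ n.+2)).

Lemma Pz_ge1 n : 1 <= Pz n.
Proof.
rewrite /Pz; elim: n => [|n IH]; first by rewrite big_ord0.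
by rewrite big_ord_recr /= mulr_ege1 // lerDl Qpow_ge0.
Qed.

Lemma Pz_gt0 n : 0 < Pz n.
Proof. exact: lt_le_trans ltr01 (Pz_ge1 n). Qed.

Lemma Pz_S n : Pz n.+1 = Pz n * (1 + Q ^+ n.+1).
Proof. by rewrite /Pz big_ord_recr. Qed.

Lemma z_rec n : z n = Az n * z n.+1 + Bz n * z n.+2.
Proof.
rewrite /z psi_rec /Az /Bz /Ac /Bc !Pz_S.
have h1 : 1 + Q ^+ n.+1 != 0 by rewrite gt_eqF // ltr_wpDr ?Qpow_ge0.
have h2 : 1 + Q ^+ n.+2 != 0 by rewrite gt_eqF // ltr_wpDr ?Qpow_ge0.
field; by rewrite h1 h2 !Dn_neq0.
Qed.

Lemma Bz_ge0 n : 0 <= Bz n.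
Proof.
rewrite /Bz /Bn; apply: divr_ge0.
  by apply: mulr_ge0; [exact: Qpow_ge0 | rewrite subr_ge0 Qpow_le1].
have := Dn_ge1 n; have := Dn_ge1 n.+1; have := Qpow_ge0 n.+1; have := Qpow_ge0 n.+2.
move: (Dn n) (Dn n.+1) (Q ^+ n.+1) (Q ^+ n.+2) => a b c e he hc hb ha.
by rewrite !mulr_ge0 ?addr_ge0 // (le_trans ler01).
Qed.

Lemma Rz_le L : \prod_(m < L) Bz m * Pz L.+1 <= (1 + Q) * Q ^+ L.
Proof.
elim: L => [|L IH]; first by rewrite big_ord0 mul1r expr0 mulr1 /Pz big_ord1.
rewrite big_ord_recr /= Pz_S.
have e : \prod_(i < L) Bz i * Bz L * (Pz L.+1 * (1 + Q ^+ L.+2))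
   = (\prod_(i < L) Bz i * Pz L.+1) * (Bz L * (1 + Q ^+ L.+2)) by ring.
have -> : (1 + Q) * Q ^+ L.+1 = ((1 + Q) * Q ^+ L) * Q by rewrite exprSr mulrA.
rewrite e; apply: ler_pM => //.
- apply: mulr_ge0; [apply: prodr_ge0 => i _; exact: Bz_ge0 | exact: ltW (Pz_gt0 _)].
- by rewrite mulr_ge0 ?Bz_ge0 ?addr_ge0 ?Qpow_ge0.
rewrite /Bz /Bn.
have d0 := Dn_ge1 L; have d1 := Dn_ge1 L.+1.
have q1 := Qpow_ge0 L.+1; have q2 := Qpow_ge0 L.+2; have q3 := Qpow_le1 L.+1.
have -> : Q ^+ L.+1 * (1 - Q ^+ L.+1) /
   (Dn L * Dn L.+1 * (1 + Q ^+ L.+1) * (1 + Q ^+ L.+2)) * (1 + Q ^+ L.+2) =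
   Q ^+ L.+1 * ((1 - Q ^+ L.+1) / (Dn L * Dn L.+1 * (1 + Q ^+ L.+1))).
  field; rewrite !gt_eqF // ?ltr_wpDr // (lt_le_trans ltr01) //.
have dp : 1 <= Dn L * Dn L.+1 * (1 + Q ^+ L.+1).
  by apply: mulr_ege1; [exact: mulr_ege1 | rewrite lerDl].
apply: (@le_trans _ _ (Q ^+ L.+1 * 1)).
  apply: ler_wpM2l => //; rewrite ler_pdivrMr ?mul1r; last exact: lt_le_trans ltr01 dp.
  by apply: le_trans dp; rewrite gerBl.
by rewrite mulr1 -[X in _ <= X]expr1; apply: Qpow_mono.
Qed.


Definition K2 := C1 / (1 - Q).

Lemma z_ge0 n : 0 <= z n.
Proof. by rewrite /z mulr_ge0 ?(le_trans ler01 (psi_ge1 n)) // ltW // Pz_gt0. Qed.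

Lemma z_le n : z n <= K2 * Pz n.
Proof. by rewrite /z ler_wpM2r ?psi_le // ltW // Pz_gt0. Qed.

Lemma casorati (a : nat -> R) L :
  (forall n, 0 <= a n <= 1) ->
  (forall n, (n < L)%N -> a n = Az n * a n.+1 + Bz n * a n.+2) ->
  `|a 0%N * z 1 - a 1%N * z 0| <= 2 * K2 * ((1 + Q) * Q ^+ L).
Proof.
move=> a01 arec.
pose W n := a n * z n.+1 - a n.+1 * z n.
have Wrec n : (n < L)%N -> W n = - (Bz n * W n.+1).
  move=> nL; rewrite /W (arec n nL) (z_rec n); ring.
have Wp m : (m <= L)%N -> `|W 0%N| = \prod_(i < m) Bz i * `|W m|.
  elim: m => [|m IH] mL; first by rewrite big_ord0 mul1r.
  rewrite IH ?(ltnW mL) // big_ord_recr /= (Wrec m mL) normrN normrM.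
  by rewrite (ger0_norm (Bz_ge0 m)) mulrA.
have WL : `|W L| <= 2 * K2 * Pz L.+1.
  rewrite /W; apply: (le_trans (ler_normB _ _)).
  have [h0 h1] := andP (a01 L); have [h2 h3] := andP (a01 L.+1).
  have e1 : `|a L * z L.+1| <= K2 * Pz L.+1.
    rewrite normrM ger0_norm // ger0_norm ?z_ge0 //.
    by rewrite -[X in _ <= X]mul1r ler_pM ?z_ge0 ?z_le.
  have e2 : `|a L.+1 * z L| <= K2 * Pz L.+1.
    rewrite normrM ger0_norm // ger0_norm ?z_ge0 //.
    rewrite -[X in _ <= X]mul1r ler_pM ?z_ge0 //.
    apply: (le_trans (z_le L)); rewrite ler_wpM2l ?divr_ge0 ?(ltW C1_gt0) //.
      by rewrite subr_ge0 ltW // Q_lt1.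
    by rewrite Pz_S ler_peMr ?(ltW (Pz_gt0 _)) // lerDl Qpow_ge0.
  have -> : 2 * K2 * Pz L.+1 = K2 * Pz L.+1 + K2 * Pz L.+1 by ring.
  exact: lerD.
rewrite /W in Wp; rewrite (Wp L (leqnn L)).
have K20 : 0 <= K2 by rewrite divr_ge0 ?(ltW C1_gt0) // subr_ge0 ltW // Q_lt1.
have Bp : 0 <= \prod_(i < L) Bz i by apply: prodr_ge0 => i _; exact: Bz_ge0.
apply: (le_trans (ler_wpM2l Bp WL)).
rewrite mulrCA; apply: ler_wpM2l; first by rewrite mulr_ge0.
exact: Rz_le.
Qed.

End QS.

Section Prob.
Variables (R : realType) (dsp : measure_display) (T : measurableType dsp)
  (P : probability T R) (E : nat -> set T).
Hypothesis mE : forall j, (0 < j)%N -> measurable (E j).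
Hypothesis hind : indep_events_pos P E.

Lemma pr_fin A : measurable A -> P A \is a fin_num.
Proof. by move=> mA; exact: fin_num_measure. Qed.

Lemma prU A B : measurable A -> measurable B -> A `&` B = set0 ->
  pr P (A `|` B) = pr P A + pr P B.
Proof. by move=> mA mB AB; rewrite /pr measureU // fineD // pr_fin. Qed.

Lemma prDI A B : measurable A -> measurable B ->
  pr P A = pr P (A `\` B) + pr P (A `&` B).
Proof.
move=> mA mB; rewrite /pr (measureDI P mA mB) fineD // pr_fin //.
  exact: measurableD.
exact: measurableI.
Qed.

Lemma pr_setT : pr P setT = 1.
Proof. by rewrite /pr probability_setT. Qed.

Lemma pr_ge0 A : 0 <= pr P A.
Proof. by rewrite /pr fine_ge0. Qed.

Lemma pr_le1 A : measurable A -> pr P A <= 1.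
Proof.
move=> mA; rewrite /pr -lee_fin fineK ?pr_fin //.
exact: probability_le1.
Qed.


Definition evb (ib : nat * bool) : set T := if ib.2 then E ib.1 else ~` E ib.1.
Definition pat (l : seq (nat * bool)) : set T := foldr (fun ib A => evb ib `&` A) setT l.
Definition wt (l : seq (nat * bool)) : R :=
  \prod_(ib <- l) (if ib.2 then pr P (E ib.1) else 1 - pr P (E ib.1)).

Lemma evb_meas ib : (0 < ib.1)%N -> measurable (evb ib).
Proof.
move=> h; rewrite /evb; case: ib.2; first exact: mE.
exact/measurableC/mE.
Qed.

Lemma pat_meas l : all (fun ib => 0 < ib.1)%N l -> measurable (pat l).
Proof.
elim: l => [|ib l IH] /=; first by move=> _; exact: measurableT.
by move=> /andP[h1 h2]; apply: measurableI; [exact: evb_meas | exact: IH].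
Qed.

Lemma set_seq_cons (i : nat) s : [set` (i :: s)] = i |` [set` s].
Proof.
apply/funext => y; apply/propext; rewrite /setU /= inE; split.
  by case/orP => [/eqP ->|h]; [left|right].
by case => [->|h]; [rewrite eqxx | rewrite h orbT].
Qed.

Lemma bigcap_pat s : \bigcap_(i in [set` s]) E i = pat [seq (i, true) | i <- s].
Proof.
elim: s => [|i s IH]; first by rewrite set_nil bigcap_set0.
by rewrite set_seq_cons bigcap_setU1 IH.
Qed.

Lemma pat_prod_gen l s :
  uniq (s ++ map fst l) -> all (fun i => 0 < i)%N (s ++ map fst l) ->
  pr P (pat [seq (i, true) | i <- s] `&` pat l) = \prod_(i <- s) pr P (E i) * wt l.
Proof.
elim: l s => [|[i b] l IH] s.
  rewrite cats0 /= setIT /wt big_nil mulr1 => us ps.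
  by rewrite -bigcap_pat hind.
rewrite /= => us ps.
have mS : forall t, all (fun i => 0 < i)%N t -> measurable (pat [seq (i, true) | i <- t]).
  move=> t ht; apply: pat_meas; rewrite all_map; apply: sub_all ht => j /=.
  by [].
have ps' : all (fun i => 0 < i)%N (i :: s ++ map fst l).
  by rewrite -(perm_all _ (permEl (perm_catCA s [:: i] (map fst l)))).
have us' : uniq (i :: s ++ map fst l).
  by rewrite -(perm_uniq (permEl (perm_catCA s [:: i] (map fst l)))).
have ml : all (fun ib => 0 < ib.1)%N l.
  by move: ps; rewrite all_cat /= all_map => /andP[_ /andP[_ h]].
have mi : (0 < i)%N by move: ps'; rewrite /= => /andP[].
case: b.
  rewrite /wt big_cons /= -/(wt l) /evb /=.
  have -> : pat [seq (i0, true) | i0 <- s] `&` (E i `&` pat l) =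
    pat [seq (i0, true) | i0 <- i :: s] `&` pat l.
    by apply/seteqP; split => y /=; rewrite /evb /=; firstorder.
  by rewrite IH // big_cons mulrA [X in X * _ = _]mulrC.
rewrite /wt big_cons /= -/(wt l) /evb /=.
set A := pat [seq (i0, true) | i0 <- s] `&` pat l.
have mA : measurable A by apply: measurableI; [apply: mS | exact: pat_meas];
  move: ps; rewrite all_cat => /andP[].
have -> : pat [seq (i0, true) | i0 <- s] `&` (~` E i `&` pat l) = A `\` E i.
  by apply/seteqP; split => y /=; rewrite /A /evb /=; firstorder.
have := @prDI A (E i) mA (mE i mi).
have -> : A `&` E i = pat [seq (i0, true) | i0 <- i :: s] `&` pat l.
  by apply/seteqP; split => y /=; rewrite /A /evb /=; firstorder.
rewrite IH // => h.
have -> : pr P (A `\` E i) = pr P A - (\prod_(i0 <- i :: s) pr P (E i0) * wt l).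
  by rewrite h addrK.
rewrite /A IH //; last first.
- by move: ps'; rewrite /= => /andP[].
- by move: us'; rewrite cons_uniq => /andP[].
rewrite big_cons; ring.
Qed.

Lemma pat_prod l : uniq (map fst l) -> all (fun i => 0 < i)%N (map fst l) ->
  pr P (pat l) = wt l.
Proof.
move=> u p; have := @pat_prod_gen l [::] u p.
by rewrite /= setTI big_nil mul1r.
Qed.


Lemma pr_cvg (F : nat -> set T) : (forall i, measurable (F i)) ->
  (forall n m, (n <= m)%N -> F m `<=` F n) ->
  (fun i => pr P (F i)) @ \oo --> pr P (\bigcap_i F i).
Proof.
move=> mF dF.
have mC : measurable (\bigcap_i F i) by exact: bigcapT_measurable.
have h : (P \o F) x @[x --> \oo] --> P (\bigcap_i F i).
  apply: nonincreasing_cvg_mu => //.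
  - by rewrite -ge0_fin_numE ?measure_ge0 ?pr_fin.
  - by move=> n m nm; apply/subsetPset; exact: dF.
rewrite -(fineK (@pr_fin _ mC)) in h.
exact: fine_cvg h.
Qed.

Variables (d r : nat).
Hypotheses (hr : (1 <= r)%N) (hrd : (2 * r < d)%N).

Definition pos (k : nat) : nat :=
  (if k %% 3 == 0 then (k %/ 3) * d + r
  else if k %% 3 == 1 then (k %/ 3) * d + (d - r)
  else (k %/ 3).+1 * d + 0)%N.

Lemma pos0 n : pos (n * 3) = (n * d + r)%N.
Proof. by rewrite /pos modnMl mulnK. Qed.

Lemma pos1 n : pos (n * 3).+1 = (n * d + (d - r))%N.
Proof. by rewrite /pos -[(n * 3).+1]addn1 modnMDl divnMDl // (modn_small (isT : (1 < 3)%N)) (divn_small (isT : (1 < 3)%N)) addn0. Qed.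

Lemma pos2 n : pos (n * 3).+2 = (n.+1 * d + 0)%N.
Proof. by rewrite /pos -[(n * 3).+2]addn2 modnMDl divnMDl // (modn_small (isT : (2 < 3)%N)) (divn_small (isT : (2 < 3)%N)) addn0. Qed.

Lemma pos_cases k : exists n, [\/ k = n * 3, k = (n * 3).+1 | k = (n * 3).+2]%N.
Proof.
elim: k => [|k [n [->|->|->]]]; first by exists 0%N; constructor.
- by exists n; constructor.
- by exists n; constructor.
- by exists n.+1; constructor; rewrite mulSn addnC addn3.
Qed.

Lemma pos_lt k : (pos k < pos k.+1)%N.
Proof.
have [n [->|->|->]] := pos_cases k.
- rewrite pos0 pos1; lia.
- rewrite pos1 pos2 mulSn; lia.
- have -> : (n * 3).+3 = (n.+1 * 3)%N by rewrite mulSn addnC addn3.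
  rewrite pos2 pos0; lia.
Qed.

Lemma pos_gt0 k : (0 < pos k)%N.
Proof.
elim: k => [|k IH]; first by rewrite -(mul0n 3) pos0 mul0n add0n.
exact: ltn_trans IH (pos_lt k).
Qed.

Lemma pos_mono j k : (j < k)%N -> (pos j < pos k)%N.
Proof.
elim: k => [//|k IH]; rewrite ltnS leq_eqVlt => /orP[/eqP ->|h].
  exact: pos_lt.
exact: ltn_trans (IH h) (pos_lt k).
Qed.

Lemma pos_ge k : (k < pos k)%N.
Proof.
elim: k => [|k IH]; first exact: pos_gt0.
exact: leq_ltn_trans IH (pos_lt k).
Qed.


Definition gb k : bool := (k %% 3 == 2)%N.

Definition goodS k : set T := ~` E (pos k) `|`
  (~` E (pos k.+1) `&` ~` E (pos k.+2) `&` (if gb k then ~` E (pos k.+3) else setT)).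

Fixpoint SSg k n : set T := if n is n'.+1 then goodS k `&` SSg k.+1 n' else setT.

Definition Sg k M := SSg k (M - k)%N.

Lemma goodS_meas k : measurable (goodS k).
Proof.
have mF j : measurable (~` E (pos j)) by apply: measurableC; apply: mE; exact: pos_gt0.
apply: measurableU => //; apply: measurableI; first exact: measurableI.
by case: gb.
Qed.

Lemma SSg_meas n k : measurable (SSg k n).
Proof.
elim: n k => [|n IH] k /=; first exact: measurableT.
exact: measurableI (goodS_meas k) (IH k.+1).
Qed.

Lemma Sg_meas k M : measurable (Sg k M).
Proof. exact: SSg_meas. Qed.

Lemma SSg_iff n k w : SSg k n w <-> (forall j, (k <= j < k + n)%N -> goodS j w).
Proof.
elim: n k => [|n IH] k /=.
  by split => // _ j; rewrite addn0 => /andP[h1 h2]; move: (leq_trans h2 h1); rewrite ltnn.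
split.
  case=> h1 /IH h2 j /andP[kj jn].
  move: kj; rewrite leq_eqVlt => /orP[/eqP <- //|kj].
  by apply: h2; rewrite kj addSnnS.
move=> h; split; first by apply: h; rewrite leqnn /= addnS ltnS leq_addr.
apply/IH => j /andP[kj jn]; apply: h; rewrite (ltnW kj) /=.
by rewrite addnS -addSn.
Qed.

Lemma Sg_iff k M w : Sg k M w <-> (forall j, (k <= j < M)%N -> goodS j w).
Proof.
rewrite /Sg SSg_iff; case: (leqP k M) => kM; first by rewrite subnKC.
have -> : (M - k = 0)%N by apply/eqP; rewrite subn_eq0 ltnW.
rewrite addn0; split => _ j /andP[h1 h2].
  by move: (leq_ltn_trans h1 h2); rewrite ltnNge ltnW.
by move: (leq_trans h2 h1); rewrite ltnn.
Qed.


Lemma pat_cat l1 l2 : pat (l1 ++ l2) = pat l1 `&` pat l2.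
Proof. by elim: l1 => [|a l1 IH] /=; rewrite ?setTI // IH setIA. Qed.

Definition Xe0 k : seq (nat * bool) := (if gb k then [:: (pos k.+3, false)] else [::])
  ++ [:: (pos k.+2, false); (pos k.+1, false); (pos k, true)].
Definition g k := if gb k then 4%N else 3%N.

Lemma decomp X k M : (k < M)%N ->
  pat X `&` Sg k M = (pat ((pos k, false) :: X) `&` Sg k.+1 M) `|`
                    (pat (Xe0 k ++ X) `&` Sg (k + g k) M).
Proof.
move=> kM; apply/seteqP; split => w.
- move=> [pX /Sg_iff hS].
  have hk : goodS k w by apply: hS; rewrite leqnn.
  case: (pselect (E (pos k) w)) => he.
    right; split.
      rewrite pat_cat; split => //.
      move: hk; rewrite /goodS /Xe0 /= => -[//|[[h1 h2] h3]].
      by case: (gb k) h3 => /= h3; rewrite /evb /=; repeat split.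
    apply/Sg_iff => j /andP[h1 h2]; apply: hS; rewrite h2 andbT.
    by apply: leq_trans h1; rewrite leq_addr.
  left; split; first by split.
  by apply/Sg_iff => j /andP[h1 h2]; apply: hS; rewrite h2 andbT ltnW.
- case=> [[[hne pX] hS1]|[hXe hS2]].
    split => //; apply/Sg_iff => j /andP[h1 h2].
    move: h1; rewrite leq_eqVlt => /orP[/eqP <-|h1]; first by left.
    by move/Sg_iff: hS1; apply; rewrite h1.
  move: hXe; rewrite pat_cat => -[hX pX]; split => //.
  rewrite /Xe0 /g in hX hS2.
  have hS2' := hS2; move/Sg_iff in hS2'.
  apply/Sg_iff => j /andP[h1 h2].
  have : j = k \/ j = k.+1 \/ j = k.+2 \/ j = k.+3 \/ (k + 4 <= j)%N by lia.
  case hgb: (gb k) hX hS2' => /= hX hS2'.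
  + move: hX; rewrite /evb /= => -[h3 [h4 [h5 [h6 _]]]].
    case=> [hj|[hj|[hj|[hj|hj]]]]; try subst j.
    * by right; rewrite hgb; repeat split.
    * by left.
    * by left.
    * by left.
    * by apply: hS2'; apply/andP; split; lia.
  + move: hX; rewrite /evb /= => -[h4 [h5 [h6 _]]].
    case=> [hj|[hj|[hj|[hj|hj]]]]; try subst j.
    * by right; rewrite hgb; repeat split.
    * by left.
    * by left.
    * by apply: hS2'; apply/andP; split; lia.
    * by apply: hS2'; apply/andP; split; lia.
Qed.


Definition inv (X : seq (nat * bool)) k :=
  uniq (map fst X) && all (fun i => (0 < i) && (i < pos k))%N (map fst X).

Lemma inv_nil k : inv [::] k. Proof. by []. Qed.

Lemma inv_cons X k b : inv X k -> inv ((pos k, b) :: X) k.+1.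
Proof.
case/andP=> u a; rewrite /inv /= u pos_gt0 pos_lt /= andbT.
apply/andP; split.
  by apply/negP => /(allP a) /andP[_]; rewrite ltnn.
apply/allP => i /(allP a) /andP[-> h] /=; exact: ltn_trans h (pos_lt k).
Qed.

Lemma inv_Xe X k : inv X k -> inv (Xe0 k ++ X) (k + g k).
Proof.
move=> h; rewrite /Xe0 /g; case: (gb k) => /=.
  by rewrite addn4; do 4 apply: inv_cons.
by rewrite addn3; do 3 apply: inv_cons.
Qed.

Lemma inv_meas X k : inv X k -> measurable (pat X).
Proof.
case/andP=> _; rewrite all_map => a; apply: pat_meas.
by apply: sub_all a => ib /= /andP[].
Qed.

Lemma pr_pat X k : inv X k -> pr P (pat X) = wt X.
Proof.
case/andP=> u a; apply: pat_prod => //.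
by apply: sub_all a => i /andP[].
Qed.

Lemma wt_cons a X : wt (a :: X) = (if a.2 then pr P (E a.1) else 1 - pr P (E a.1)) * wt X.
Proof. by rewrite /wt big_cons. Qed.

Lemma wt_cat X Y : wt (X ++ Y) = wt X * wt Y.
Proof. by rewrite /wt big_cat. Qed.

Lemma Xe0_E k w : pat (Xe0 k) w -> E (pos k) w.
Proof. by rewrite /Xe0; case: (gb k); rewrite /= /evb /=; firstorder. Qed.

Arguments decomp X {k M}.
Arguments inv_cons {X k} b.
Arguments inv_Xe {X k}.
Arguments inv_meas {X k}.
Arguments pr_pat {X k}.

Lemma decomp_disj X k M :
  (pat ((pos k, false) :: X) `&` Sg k.+1 M) `&` (pat (Xe0 k ++ X) `&` Sg (k + g k) M) = set0.
Proof.
apply/seteqP; split => w //= [[[h _] _] [hX _]].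
move: hX; rewrite pat_cat => -[/Xe0_E h2 _]; exact: h h2.
Qed.

Lemma indepS n : forall k M X, (M - k)%N = n -> inv X k ->
  pr P (pat X `&` Sg k M) = wt X * pr P (Sg k M).
Proof.
elim/ltn_ind: n => n IH k M X hn hX.
case: (ltnP k M) => kM; last first.
  have -> : Sg k M = setT by rewrite /Sg; have -> : (M - k = 0)%N by apply/eqP; rewrite subn_eq0.
  by rewrite setIT pr_setT mulr1 (pr_pat hX).
have e0 := decomp [::] kM; rewrite (_ : pat [::] = setT) // setTI in e0.
rewrite (decomp X kM) e0.
have m1 Y : inv Y k.+1 -> measurable (pat Y `&` Sg k.+1 M).
  by move=> hY; apply: measurableI; [exact: inv_meas hY | exact: Sg_meas].
have m2 Y : inv Y (k + g k) -> measurable (pat Y `&` Sg (k + g k) M).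
  by move=> hY; apply: measurableI; [exact: inv_meas hY | exact: Sg_meas].
have i1 := inv_cons false hX; have i2 := inv_Xe hX.
have j1 := inv_cons false (inv_nil k); have j2 := inv_Xe (inv_nil k).
rewrite !prU ?m1 ?m2 ?decomp_disj //.
have l1 : (M - k.+1 < n)%N by rewrite -hn; lia.
have l2 : (M - (k + g k) < n)%N by rewrite -hn /g; case: (gb k); lia.
rewrite (IH _ l1 k.+1 M _ erefl i1) (IH _ l1 k.+1 M _ erefl j1).
rewrite (IH _ l2 (k + g k) M _ erefl i2) (IH _ l2 (k + g k) M _ erefl j2).
rewrite !wt_cons !wt_cat /wt !big_nil; first ring.
all: first [apply: m1 | apply: m2]; assumption.
Qed.

Arguments indepS {n k M X}.

Lemma wS k M : (k < M)%N -> pr P (Sg k M) =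
  (1 - pr P (E (pos k))) * pr P (Sg k.+1 M) + wt (Xe0 k) * pr P (Sg (k + g k) M).
Proof.
move=> kM; have e0 := decomp [::] kM; rewrite (_ : pat [::] = setT) // setTI in e0.
rewrite e0 prU; last 3 first.
- apply: measurableI; [exact: inv_meas (inv_cons false (inv_nil k)) | exact: Sg_meas].
- apply: measurableI; [exact: inv_meas (inv_Xe (inv_nil k)) | exact: Sg_meas].
- exact: decomp_disj.
rewrite (indepS erefl (inv_cons false (inv_nil k))) (indepS erefl (inv_Xe (inv_nil k))).
by rewrite cats0 wt_cons /wt big_nil mulr1.
Qed.


Lemma e3 n : (n * 3).+3 = (n.+1 * 3)%N.
Proof. by rewrite mulSn addnC addn3. Qed.

Lemma gb0 n : gb (n * 3) = false.
Proof. by rewrite /gb modnMl. Qed.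
Lemma gb1 n : gb (n * 3).+1 = false.
Proof. by rewrite /gb -[(n * 3).+1]addn1 modnMDl. Qed.
Lemma gb2 n : gb (n * 3).+2 = true.
Proof. by rewrite /gb -[(n * 3).+2]addn2 modnMDl. Qed.

Lemma block_iff n w : UV_block E d r n w <->
  (goodS (n * 3) w /\ goodS (n * 3).+1 w /\ goodS (n * 3).+2 w).
Proof.
rewrite /UV_block /goodS gb0 gb1 gb2 !e3 !pos0 !pos1 !pos2 /=.
have c0 := pselect (E (n * d + r)%N w).
have c1 := pselect (E (n * d + (d - r))%N w).
have c2 := pselect (E (n.+1 * d + 0)%N w).
rewrite /setU /setI /setC /setT /=.
by case: c0 => c0; case: c1 => c1; case: c2 => c2; firstorder.
Qed.

Lemma Uevt_eq : Uevt E d r = [set w | forall j, goodS j w].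
Proof.
apply/seteqP; split => w /=.
  move=> h j; have [n [->|->|->]] := pos_cases j; move: (h n I) => /block_iff; firstorder.
by move=> h n _; apply/block_iff.
Qed.

Lemma Vevt_eq : Vevt E d r = [set w | forall j, (3 <= j)%N -> goodS j w].
Proof.
apply/seteqP; split => w /=.
  move=> h j j3; have [n hn] := pos_cases j.
  by case: hn => hj; subst j; (have n1 : (1 <= n)%N by lia);
    move: (h n n1) => /block_iff; firstorder.
move=> h n /= n1; apply/block_iff; split; [|split]; apply: h; lia.
Qed.

Lemma bigcap_Sg k : \bigcap_L Sg k (L.+1 * 3) = [set w | forall j, (k <= j)%N -> goodS j w].
Proof.
apply/seteqP; split => w /=.
  move=> h j kj; have := h j I; move/Sg_iff; apply; rewrite kj /=; lia.
by move=> h L _; apply/Sg_iff => j /andP[kj _]; exact: h.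
Qed.

Lemma Sg_mono k M M' : (M <= M')%N -> Sg k M' `<=` Sg k M.
Proof.
move=> MM w /Sg_iff h; apply/Sg_iff => j /andP[kj jM]; apply: h.
by rewrite kj /=; exact: leq_trans jM MM.
Qed.


Lemma a_rec n M : ((n * 3).+3 < M)%N ->
  let p0 := pr P (E (pos (n * 3))) in
  let p1 := pr P (E (pos (n * 3).+1)) in
  let p2 := pr P (E (pos (n * 3).+2)) in
  let p3 := pr P (E (pos (n.+1 * 3))) in
  let p4 := pr P (E (pos (n.+1 * 3).+1)) in
  let p5 := pr P (E (pos (n.+1 * 3).+2)) in
  pr P (Sg (n * 3) M) =
    (1 - p2) * ((1 - p0) * (1 - p1) + (1 - p0) * p1 + p0 * (1 - p1)) * pr P (Sg (n.+1 * 3) M)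
  + (1 - p0) * (1 - p4) * (1 - p5) * ((1 - p1) * p2 * (1 - p3) - p1 * (1 - p2) * p3)
      * pr P (Sg (n.+2 * 3) M).
Proof.
move=> hM p0 p1 p2 p3 p4 p5.
have h0 : pr P (Sg (n * 3) M) = (1 - p0) * pr P (Sg (n * 3).+1 M)
    + (1 - p2) * (1 - p1) * p0 * pr P (Sg (n.+1 * 3) M).
  rewrite (@wS (n * 3) M); last by lia.
  rewrite /g /Xe0 gb0 /= addn3 e3 /wt !big_cons big_nil /= /p0 /p1 /p2; ring.
have h1 : pr P (Sg (n * 3).+1 M) = (1 - p1) * pr P (Sg (n * 3).+2 M)
    + (1 - p3) * (1 - p2) * p1 * pr P (Sg (n.+1 * 3).+1 M).
  rewrite (@wS ((n * 3).+1) M); last by lia.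
  rewrite /g /Xe0 gb1 /= addn3 e3 /wt !big_cons big_nil /= /p1 /p2 /p3; ring.
have h2 : pr P (Sg (n * 3).+2 M) = (1 - p2) * pr P (Sg (n.+1 * 3) M)
    + (1 - p5) * (1 - p4) * (1 - p3) * p2 * pr P (Sg (n.+2 * 3) M).
  rewrite (@wS ((n * 3).+2) M); last by lia.
  rewrite /g /Xe0 gb2 /= addn4 !e3 /wt !big_cons big_nil /= /p2 /p3 /p4 /p5.
  have -> : (n.+1 * 3).+1 = ((n * 3).+4)%N by rewrite -e3.
  ring.
have h3 : pr P (Sg (n.+1 * 3) M) = (1 - p3) * pr P (Sg (n.+1 * 3).+1 M)
    + (1 - p5) * (1 - p4) * p3 * pr P (Sg (n.+2 * 3) M).
  rewrite (@wS (n.+1 * 3) M); last by lia.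
  rewrite /g /Xe0 gb0 /= addn3 e3 /wt !big_cons big_nil /= /p3 /p4 /p5; ring.
rewrite h0 h1 h2 h3; ring.
Qed.


Lemma prE01 j : 0 <= pr P (E (pos j)) <= 1.
Proof. by rewrite pr_ge0 pr_le1 //; apply: mE; exact: pos_gt0. Qed.

Lemma wt_Xe0_ge0 k : 0 <= wt (Xe0 k).
Proof.
have f j : 0 <= 1 - pr P (E (pos j)) by have := prE01 j => /andP[_ h]; rewrite subr_ge0.
have p j : 0 <= pr P (E (pos j)) by have := prE01 j => /andP[h _].
rewrite /wt /Xe0; case: (gb k); rewrite /= !big_cons big_nil /=;
by rewrite !mulr_ge0.
Qed.

Lemma Sg_lower m : forall k M, (M - k)%N = m ->
  \prod_(k <= j < M) (1 - pr P (E (pos j))) <= pr P (Sg k M).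
Proof.
elim: m => [|m IH] k M hm.
  have kM : (M <= k)%N by rewrite -subn_eq0 hm.
  rewrite big_geq // /Sg; have -> : (M - k = 0)%N by apply/eqP; rewrite subn_eq0.
  by rewrite pr_setT.
have kM : (k < M)%N by rewrite -subn_gt0 hm.
rewrite (@wS k M kM) big_ltn //.
have := prE01 k => /andP[_ h1].
apply: (@le_trans _ _ ((1 - pr P (E (pos k))) * pr P (Sg k.+1 M))).
  apply: ler_wpM2l; first by rewrite subr_ge0.
  by apply: IH; lia.
by rewrite lerDl mulr_ge0 ?wt_Xe0_ge0 ?pr_ge0.
Qed.

End Prob.

Theorem theorem4p1 (R : realType) (dsp : measure_display)
  (T : measurableType dsp) (P : probability T R)
  (q : R) (d r : nat) (E : nat -> set T) :
  0 < q -> q < 1 -> (3 <= d)%N -> (1 <= r)%N -> (2 * r < d)%N ->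
  (forall j, (0 < j)%N -> measurable (E j)) ->
  (forall j, (0 < j)%N -> pr P (E j) = q ^+ j / (1 + q ^+ j)) ->
  indep_events_pos P E ->
  condpr P (Uevt E d r) (Vevt E d r) =
    1 / ((1 + q ^+ r) * (1 + q ^+ (d - r)) * (1 + q ^+ d))
      * (1 / g3 (- q ^+ r) (q ^+ d))
  /\
  series (g3_term (- q ^+ r) (q ^+ d)) @ \oo -->
    condpr P (~` E r `&` ~` E (d - r)%N `&` ~` E d) (Uevt E d r).
Proof.
move=> q0 q1 d3 r1 rd mE hp hind.
set x := q ^+ r; set w := q ^+ (d - r).
have x0 : 0 < x by rewrite exprn_gt0.
have w0 : 0 < w by rewrite exprn_gt0.
have rd' : (r <= d)%N by lia.
have hQ : q ^+ d = x * w by rewrite -exprD subnKC.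
have Q1 : x * w < 1 by rewrite -hQ exprn_ilt1 // ?ltW //; lia.
have Q0 : 0 < x * w by rewrite mulr_gt0.
pose Q := x * w.
have qpos n : q ^+ (n * d) = Q ^+ n by rewrite mulnC exprM hQ.
have p0 n : pr P (E (pos d r (n * 3))) = x * Q ^+ n / (1 + x * Q ^+ n).
  by rewrite pos0 hp; [rewrite exprD qpos [_ * x]mulrC | lia].
have p1 n : pr P (E (pos d r (n * 3).+1)) = w * Q ^+ n / (1 + w * Q ^+ n).
  by rewrite pos1 hp; [rewrite exprD qpos [_ * w]mulrC | lia].
have p2 n : pr P (E (pos d r (n * 3).+2)) = Q ^+ n.+1 / (1 + Q ^+ n.+1).
  by rewrite pos2 addn0 hp; [rewrite qpos | lia].
pose aL L n := pr P (Sg dsp T E d r (n * 3) (L.+1 * 3)).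
have arec L n : (n < L)%N -> aL L n = Az R x w n * aL L n.+1 + Bz R x w n * aL L n.+2.
  move=> nL; have := @a_rec R dsp T P E mE hind d r r1 rd n (L.+1 * 3).
  move=> /(_ _) /=; rewrite /aL; move=> -> ; last by lia.
  rewrite !p0 !p1 !p2 /Az /Bz /Dn /Bn -/Q.
  have t0 : 0 < Q ^+ n by rewrite exprn_gt0.
  rewrite !exprS; move: (Q ^+ n) t0 => t t0.
  rewrite /Q.
  by congr (_ * _ + _ * _); field; rewrite !gt_eqF ?addr_gt0 ?mulr_gt0.
have mS k M : measurable (Sg dsp T E d r k M) := @Sg_meas dsp T E mE d r r1 rd k M.
have a01 L n : 0 <= aL L n <= 1 by rewrite pr_ge0 pr_le1 // mS.
have cas L := @casorati R x w x0 w0 Q1 (aL L) L (a01 L) (arec L).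
have monoS k : forall n m, (n <= m)%N ->
    Sg dsp T E d r k (m.+1 * 3) `<=` Sg dsp T E d r k (n.+1 * 3).
  by move=> n m nm; apply: Sg_mono; rewrite leq_mul2r ltnS nm orbT.
have hU : (fun L => aL L 0) @ \oo --> pr P (Uevt E d r).
  have -> : Uevt E d r = \bigcap_L Sg dsp T E d r 0 (L.+1 * 3).
    by rewrite bigcap_Sg // Uevt_eq; apply/seteqP; split => v /= h j; [move=> _|]; apply: h.
  exact: (@pr_cvg R dsp T P (fun L => Sg dsp T E d r 0 (L.+1 * 3)) (fun L => mS _ _) (monoS 0%N)).
have hV : (fun L => aL L 1) @ \oo --> pr P (Vevt E d r).
  have -> : Vevt E d r = \bigcap_L Sg dsp T E d r 3 (L.+1 * 3).
    by rewrite bigcap_Sg // Vevt_eq.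
  exact: (@pr_cvg R dsp T P (fun L => Sg dsp T E d r 3 (L.+1 * 3)) (fun L => mS _ _) (monoS 3%N)).
set z0 := z R x w 0; set z1 := z R x w 1.
have ez0 : z0 = 1 by rewrite /z0 /z psi0 // /Pz big_ord0 mulr1.
have ez1 : z1 = psi R x w 1 * (1 + Q) by rewrite /z1 /z /Pz big_ord1 expr1.
have hd : (fun L => aL L 0 * z1 - aL L 1 * z0) @ \oo -->
    pr P (Uevt E d r) * z1 - pr P (Vevt E d r) * z0.
  by apply: cvgB; apply: cvgM => //; exact: cvg_cst.
have he : (fun L => 2 * K2 R x w * ((1 + x * w) * (x * w) ^+ L)) @ \oo --> 0.
  have := @cvg_geometric R (2 * K2 R x w * (1 + x * w)) (x * w).
  rewrite gtr0_norm // => /(_ Q1) h.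
  have -> : (fun L => 2 * K2 R x w * ((1 + x * w) * (x * w) ^+ L)) =
     geometric (2 * K2 R x w * (1 + x * w)) (x * w).
    by apply: funext => L /=; rewrite mulrA.
  exact: h.
have hd0 : (fun L => aL L 0 * z1 - aL L 1 * z0) @ \oo --> 0.
  apply: (@squeeze_cvgr _ _ _ _ (fun L => - (2 * K2 R x w * ((1 + x * w) * (x * w) ^+ L)))
    (fun L => 2 * K2 R x w * ((1 + x * w) * (x * w) ^+ L))).
  - by apply: nearW => L; rewrite -ler_norml; exact: cas.
  - by rewrite -oppr0; apply: cvgN.
  - exact: he.
have eUV : pr P (Uevt E d r) * z1 - pr P (Vevt E d r) * z0 = 0 := cvg_unique _ hd hd0.
rewrite ez0 ez1 mulr1 in eUV.
have eV : pr P (Vevt E d r) = pr P (Uevt E d r) * (psi R x w 1 * (1 + Q)).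
  by apply/eqP; rewrite eq_sym -subr_eq0 eUV.
have lowM M : (expR (q / (1 - q)))^-1 <= pr P (Sg dsp T E d r 0 M).
  apply: le_trans (@Sg_lower R dsp T P E mE hind d r r1 rd (M - 0)%N 0 M erefl).
  rewrite big_mkord.
  have f j : (1 + q ^+ j.+1)^-1 <= 1 - pr P (E (pos d r j)).
    rewrite hp ?pos_gt0 //.
    have a0 : 0 < q ^+ pos d r j by rewrite exprn_gt0.
    have -> : 1 - q ^+ pos d r j / (1 + q ^+ pos d r j) = (1 + q ^+ pos d r j)^-1.
      by field; rewrite gt_eqF // addr_gt0.
    rewrite lef_pV2 ?posrE ?addr_gt0 ?exprn_gt0 // lerD2l.
    by apply: ler_wiXn2l; rewrite ?ltW // pos_ge.
  apply: (@le_trans _ _ (\prod_(j < M) (1 + q ^+ j.+1)^-1)); last first.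
    apply: ler_prod => j _; rewrite f andbT invr_ge0 addr_ge0 // exprn_ge0 // ltW //.
  rewrite prodfV lef_pV2 ?posrE ?expR_gt0 //; last first.
    by apply: prodr_gt0 => j _; rewrite addr_gt0 // exprn_gt0.
  apply: le_trans (@prod_le_expR R M (fun j => q ^+ j.+1) _) _.
    by move=> j; rewrite exprn_ge0 // ltW.
  rewrite ler_expR.
  have q1' : q * 1 < 1 by rewrite mulr1.
  have := @geom_le R q 1 q0 ltr01 q1' q M (ltW q0).
  rewrite !mulr1; apply: le_trans; apply: ler_sum => j _.
  by rewrite exprS.
have pU : (expR (q / (1 - q)))^-1 <= pr P (Uevt E d r).
  rewrite -(cvg_lim _ hU) //; apply: limr_ge; first exact: cvgP hU.
  by apply: nearW => L; exact: lowM.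
have pU0 : 0 < pr P (Uevt E d r).
  by apply: lt_le_trans pU; rewrite invr_gt0 expR_gt0.
set X3 : seq (nat * bool) := [:: (pos d r 2, false); (pos d r 1, false); (pos d r 0, false)].
have iX3 : inv d r X3 3.
  apply: (@inv_cons d r r1 rd _ 2 false); apply: (@inv_cons d r r1 rd _ 1 false).
  apply: (@inv_cons d r r1 rd _ 0 false); exact: inv_nil.
have ps0 : pos d r 0 = r by have := pos0 d r 0; rewrite mul0n add0n.
have ps1 : pos d r 1 = (d - r)%N by have := pos1 d r 0; rewrite mul0n add0n.
have ps2 : pos d r 2 = d by have := pos2 d r 0; rewrite mul1n addn0.
have eF : ~` E r `&` ~` E (d - r)%N `&` ~` E d `&` Uevt E d r =
    \bigcap_L (pat dsp T E X3 `&` Sg dsp T E d r 3 (L.+1 * 3)).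
  rewrite Uevt_eq; apply/seteqP; split => v /=.
  - move=> [[[h0 h1] h2] hu] L _; rewrite /X3 /= /evb /= ps0 ps1 ps2.
    split; first by repeat split.
    by apply/Sg_iff => j _; exact: hu j.
  - move=> h; have := h 0%N I; rewrite /X3 /= /evb /= ps0 ps1 ps2.
    move=> -[[h2 [h1 [h0 _]]] _].
    split; first by split.
    move=> j; case: (ltnP j 3) => j3.
      left; move: j3; case: j => [|[|[|j]]] // _; rewrite ?ps0 ?ps1 ?ps2 //.
    have := h j I => -[_ /Sg_iff]; apply; rewrite j3 /=; lia.
have mX3 : measurable (pat dsp T E X3) := @inv_meas dsp T E mE d r X3 3 iX3.
have hF : (fun L => pr P (pat dsp T E X3 `&` Sg dsp T E d r 3 (L.+1 * 3))) @ \oo -->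
    pr P (~` E r `&` ~` E (d - r)%N `&` ~` E d `&` Uevt E d r).
  rewrite eF.
  apply: (@pr_cvg R dsp T P (fun L => pat dsp T E X3 `&` Sg dsp T E d r 3 (L.+1 * 3))).
    by move=> L; apply: measurableI.
  by move=> n m nm; apply: setIS; exact: monoS.
have eFL L : pr P (pat dsp T E X3 `&` Sg dsp T E d r 3 (L.+1 * 3)) =
    wt R dsp T P E X3 * aL L 1.
  exact: (@indepS R dsp T P E mE hind d r r1 rd _ 3 (L.+1 * 3) X3 erefl iX3).
have hF2 : (fun L => pr P (pat dsp T E X3 `&` Sg dsp T E d r 3 (L.+1 * 3))) @ \oo -->
    wt R dsp T P E X3 * pr P (Vevt E d r).
  rewrite (funext eFL); apply: cvgM => //; exact: cvg_cst.
have eF3 : pr P (~` E r `&` ~` E (d - r)%N `&` ~` E d `&` Uevt E d r) =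
    wt R dsp T P E X3 * pr P (Vevt E d r) by exact: (cvg_unique _ hF hF2).
have wX3 : wt R dsp T P E X3 = ((1 + Q) * (1 + w) * (1 + x))^-1.
  rewrite /wt /X3 !big_cons big_nil /= ps0 ps1 ps2 !hp //; try lia.
  rewrite hQ -/x -/w -/Q; field.
  by rewrite !gt_eqF ?addr_gt0 ?mulr_gt0.
have D0 : Dn R x w 0 = (1 + x) * (1 + w) by rewrite /Dn expr0 !mulr1.
have p1g : 1 <= psi R x w 1 by exact: psi_ge1.
have g3v : g3 (- x) (x * w) = psi R x w 1 / Dn R x w 0.
  exact: (cvg_lim _ (@g3_cvg R x w x0 w0 Q1)).
have UV : Uevt E d r `&` Vevt E d r = Uevt E d r.
  apply/setIidl; rewrite Uevt_eq Vevt_eq // => v /= h j _; exact: h.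
split.
- rewrite /condpr UV eV hQ g3v /Dn expr0 !mulr1 -/Q.
  field; rewrite !gt_eqF ?addr_gt0 ?mulr_gt0 //; exact: lt_le_trans ltr01 p1g.
- rewrite hQ.
  have -> : condpr P (~` E r `&` ~` E (d - r)%N `&` ~` E d) (Uevt E d r) =
      psi R x w 1 / Dn R x w 0.
    rewrite /condpr eF3 wX3 eV /Dn expr0 !mulr1 -/Q; field.
    rewrite !gt_eqF ?addr_gt0 ?mulr_gt0 //; exact: lt_le_trans ltr01 p1g.
  exact: (@g3_cvg R x w x0 w0 Q1).
Qed.
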